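(* We have $(\chi^L_k)^\dagger=\chi^L_{-k}$ for $k\in\pm\mathcal K^{(\ell_L)}$ and $(\chi^R_k)^\dagger=\chi^R_{-k}$ for $k\in\pm\mathcal K^{(\ell_R)}$; $\{\chi^L_{k_1},\chi^L_{k_2}\}=\delta_{k_1,-k_2}\mathrm{id}$ for $k_1,k_2\in\pm\mathcal K^{(\ell_L)}$; $\{\chi^R_{k_1},\chi^R_{k_2}\}=\delta_{k_1,-k_2}\mathrm{id}$ for $k_1,k_2\in\pm\mathcal K^{(\ell_R)}$; and $\{\chi^L_k,\chi^R_{k'}\}=0$ for $k\in\pm\mathcal K^{(\ell_L)}$, $k'\in\pm\mathcal K^{(\ell_R)}$. Here $\{A,B\}=AB+BA$.
   Context: Fix integers $a<0<b$, $\ell_L=-a$, $\ell_R=b$; for a positive integer $n$, $\mathcal K^{(n)}=\{\frac12,\dots,n-\frac12\}$, $\pm\mathcal K^{(n)}=\mathcal K^{(n)}\cup(-\mathcal K^{(n)})$. $C=\{a,\dots,b\}$, $C^*=\{a+\frac12,\dots,b-\frac12\}$, $C^*_L=\{a+\frac12,\dots,-\frac12\}$, $C^*_R=\{\frac12,\dots,b-\frac12\}$. $\tilde V$ is the complex inner product space with orthonormal basis $(e_\rho)_{\rho\in\{\pm1\}^C}$, $\dagger$ the adjoint. For $x'\in C^*$, $\varsigma_{x'}(\rho)$ flips the signs of $\rho_x$, $x<x'$; $\psi_{x'}e_\rho=\frac{-\rho_{x'-1/2}+i\rho_{x'+1/2}}{\sqrt2}e_{\varsigma_{x'}(\rho)}$,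 $\psi^*_{x'}e_\rho=\frac{-i\rho_{x'-1/2}+\rho_{x'+1/2}}{\sqrt2}e_{\varsigma_{x'}(\rho)}$. Substrip eigenfunctions: for integers $a'<b'$, $n=b'-a'$, on the lattice strip $\{a',\dots,b'\}\times\mathbb Z\subset\mathbb C$ with nearest-neighbour edges (identified with midpoints), $F$ is s-holomorphic if $F(z_1)+\frac{i|v-p|}{v-p}\overline{F(z_1)}=F(z_2)+\frac{i|v-p|}{v-p}\overline{F(z_2)}$ for edges adjacent to a common vertex $v$ and face $p$, with Riemann boundary values if $F(a'+iy')\in e^{-i\pi/4}\mathbb R$, $F(b'+iy')\in e^{i\pi/4}\mathbb R$. For $k\in\mathcal K^{(n)}$ let $\omega_k\in((k-\frac12)\pi/n,k\pi/n)$ solve $\cos((n+\frac12)\omega)/\cos((n-\frac12)\omega)=3-2\sqrt2$, $\lambda^{(n)}_{\pm k}=(2-\cos\omega_k+\sqrt{(3-\cos\omega_k)(1-\cos\omega_k)})^{\pm1}$; $F_{\pm k}$ is the unique s-holomorphic function with Riemann boundary values, $F_{\pm k}(z+ih)=(\lambda^{(n)}_{\pm k})^hF_{\pm k}(z)$, values in $e^{-i\pi/4}\mathbb R_{>0}$ on edges $a'+iy'$, and unit-norm restriction to the height-0 horizontal edges $\{a'+\frac12,\dots,b'-\frac12\}$, the norm coming from $\langle f,g\rangle=\mathrm{Re}\sum f\bar g$. Known facts: these restrictions $f_{k}$, $k\in\pm\mathcal K^{(n)}$, form an orthonormal basis of $\mathbb C^{\{a'+1/2,\dots,b'-1/2\}}$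 and satisfy $f_{-k}=-i\overline{f_k}$. Let $f^L_k$ ($k\in\pm\mathcal K^{(\ell_L)}$) be these restrictions for $(a',b')=(a,0)$ (functions on $C^*_L$) and $f^R_k$ ($k\in\pm\mathcal K^{(\ell_R)}$) those for $(a',b')=(0,b)$ (functions on $C^*_R$). Modes: $\chi^L_k=\frac{e^{i\pi/4}}{2}\sum_{x'\in C^*_L}(i f^L_k(x')\psi_{x'}-i\overline{f^L_k(x')}\psi^*_{x'})$ and $\chi^R_k=\frac{e^{i\pi/4}}{2}\sum_{x'\in C^*_R}(i f^R_k(x')\psi_{x'}-i\overline{f^R_k(x')}\psi^*_{x'})$. *)

(* Defs.v *)
From HB Require Import structures.
From mathcomp Require Import all_boot all_order all_algebra.
From mathcomp Require Import all_classical all_reals all_analysis.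
From mathcomp Require Import complex.
Set Implicit Arguments. Unset Strict Implicit. Unset Printing Implicit Defensive.
Import Order.TTheory GRing.Theory Num.Theory.
Local Open Scope ring_scope.
Local Open Scope complex_scope.

Section Defs.
Variable R : realType.
Local Notation C := R[i].

Definition eipi4 : C := (Num.sqrt (2:R))^-1 +i* (Num.sqrt (2:R))^-1.

(* Spin configurations rho in {+-1}^C, C = {a,...,b}.  Index i : 'I_N
   encodes the site x = a + i; (rho i = true) means rho_x = +1.        *)
Definition nsites (a b : int) : nat := (`|b - a|%N).+1.
Definition spin (a b : int) := {ffun 'I_(nsites a b) -> bool}.

(* rho_x as a number (+1 / -1); only used for a <= x <= b *)
Definition spinval (a b : int) (rho : spin a b) (x : int) : R :=
  if rho (inord `|x - a|%N) then 1 else -1.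

(* sigma_{x'} with x' = j + 1/2: flip the signs of rho_x for x < x', i.e. x <= j *)
Definition flipbelow (a b : int) (j : int) (rho : spin a b) : spin a b :=
  [ffun i : 'I_(nsites a b) => if (a + (i : nat)%:Z <= j) then ~~ rho i else rho i].

(* Operators on tilde V as matrices in the orthonormal basis (e_rho):
   entry (sigma, rho) is the e_sigma-coefficient of A e_rho. *)
Definition op (a b : int) := 'M[C]_(#|{: spin a b}|).

Definition op_of (a b : int) (c : spin a b -> C) (g : spin a b -> spin a b) : op a b :=
  \matrix_(s, r) (if enum_val s == g (enum_val r) then c (enum_val r) else 0).

(* psi_{x'} and psi^*_{x'}, x' = j + 1/2 *)
Definition psi (a b : int) (j : int) : op a b :=
  op_of (fun rho => ((- spinval rho j)%:C + 'i * (spinval rho (j + 1))%:C)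
                     / (Num.sqrt (2:R))%:C)
        (flipbelow j).
Definition psistar (a b : int) (j : int) : op a b :=
  op_of (fun rho => (- 'i * (spinval rho j)%:C + (spinval rho (j + 1))%:C)
                     / (Num.sqrt (2:R))%:C)
        (flipbelow j).

Definition adj (n : nat) (A : 'M[C]_n) : 'M[C]_n := (map_mx conjc A)^T.

Definition anticomm (n : nat) (A B : 'M[C]_n) : 'M[C]_n := A *m B + B *m A.

(* chi = e^{i pi/4}/2 sum_{x' = j+1/2, lo <= j < hi} (i f(x') psi_{x'} - i conj(f(x')) psi^*_{x'}),
   with f given as a function of j. *)
Definition mode_op (a b : int) (lo hi : int) (f : int -> C) : op a b :=
  (eipi4 / 2%:R) *:
    \sum_(m < `|hi - lo|%N)
      let j := lo + m%:Z in
      ('i * f j) *: psi a b j - ('i * conjc (f j)) *: psistar a b j.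

(* Signed half-integers k in +-K^{(n)} are encoded by K = 2k (odd, |K| < 2n). *)
Definition inK (n : nat) (K : int) : bool := odd `|K|%N && (`|K| < 2 * n)%N.

(* Lattice strip {a',...,b'} x Z.  Points z with 2z in Z + iZ are encoded by
   doubled coordinates (X, Y), z = (X + iY)/2. *)
Definition is_vertex (a' b' X Y : int) : bool :=
  ~~ odd `|X|%N && ~~ odd `|Y|%N && (2 * a' <= X <= 2 * b').
Definition is_face (a' b' X Y : int) : bool :=
  odd `|X|%N && odd `|Y|%N && (2 * a' < X < 2 * b').
(* edges identified with their midpoints *)
Definition is_hedge (a' b' X Y : int) : bool :=
  odd `|X|%N && ~~ odd `|Y|%N && (2 * a' < X < 2 * b').
Definition is_vedge (a' b' X Y : int) : bool :=
  ~~ odd `|X|%N && odd `|Y|%N && (2 * a' <= X <= 2 * b').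
Definition is_edge (a' b' X Y : int) : bool := is_hedge a' b' X Y || is_vedge a' b' X Y.
(* adjacency (edge midpoint at distance 1/2 from a vertex / face centre) *)
Definition adjacent (X1 Y1 X2 Y2 : int) : bool := (`|X1 - X2| + `|Y1 - Y2| == 1)%N.

Definition pt (X Y : int) : C := (X%:~R / 2%:R) +i* (Y%:~R / 2%:R).

Definition s_holomorphic (a' b' : int) (F : int -> int -> C) : Prop :=
  forall X1 Y1 X2 Y2 Xv Yv Xp Yp : int,
    is_edge a' b' X1 Y1 -> is_edge a' b' X2 Y2 ->
    is_vertex a' b' Xv Yv -> is_face a' b' Xp Yp ->
    adjacent X1 Y1 Xv Yv -> adjacent X2 Y2 Xv Yv ->
    adjacent X1 Y1 Xp Yp -> adjacent X2 Y2 Xp Yp ->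
    let w := pt Xv Yv - pt Xp Yp in
    let eta := 'i * `|w| / w in
    F X1 Y1 + eta * conjc (F X1 Y1) = F X2 Y2 + eta * conjc (F X2 Y2).

Definition riemann_bv (a' b' : int) (F : int -> int -> C) : Prop :=
  forall Y : int, odd `|Y|%N ->
    (exists r : R, F (2 * a') Y = r%:C * conjc eipi4) /\
    (exists r : R, F (2 * b') Y = r%:C * eipi4).

(* omega_k for k = m + 1/2 in K^{(n)}:
   omega in ((k - 1/2) pi / n, k pi / n) solving
   cos((n+1/2) omega) / cos((n-1/2) omega) = 3 - 2 sqrt 2 *)
Definition is_omega (n m : nat) (om : R) : Prop :=
  (m%:R * pi / n%:R < om < (m%:R + 2^-1) * pi / n%:R) /\
  cos ((n%:R + 2^-1) * om) / cos ((n%:R - 2^-1) * om) = 3%:R - 2%:R * Num.sqrt 2.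

Definition lambda_base (om : R) : R :=
  2%:R - cos om + Num.sqrt ((3%:R - cos om) * (1 - cos om)).

Definition is_eigenfunction (a' b' : int) (K : int) (F : int -> int -> C) : Prop :=
  exists om : R,
    is_omega `|b' - a'|%N (`|K|%N).-1./2 om /\
    let lam := if (0 < K) then lambda_base om else (lambda_base om)^-1 in
    s_holomorphic a' b' F /\ riemann_bv a' b' F /\
    (forall (X Y : int) (h : int), is_edge a' b' X Y ->
        F X (Y + 2 * h) = (lam ^ h)%:C * F X Y) /\
    (forall Y : int, odd `|Y|%N ->
        exists r : R, 0 < r /\ F (2 * a') Y = r%:C * conjc eipi4) /\
    'Re (\sum_(m < `|b' - a'|%N)
           F (2 * (a' + m%:Z) + 1) 0 * conjc (F (2 * (a' + m%:Z) + 1) 0)) = 1.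

(* f : int -> int -> C, f K j = f_{K/2}(j + 1/2), is the family of
   height-0 restrictions of the eigenfunctions of the strip (a', b') *)
Definition restrictions (a' b' : int) (f : int -> int -> C) : Prop :=
  forall K, inK `|b' - a'|%N K ->
    exists F, is_eigenfunction a' b' K F /\
      forall j : int, a' <= j < b' -> f K j = F (2 * j + 1) 0.

(* Known facts (from the context): orthonormality w.r.t. <f,g> = Re sum f conj g,
   and f_{-k} = -i conj f_k *)
Definition known_facts (a' b' : int) (f : int -> int -> C) : Prop :=
  (forall K1 K2, inK `|b' - a'|%N K1 -> inK `|b' - a'|%N K2 ->
     'Re (\sum_(m < `|b' - a'|%N) f K1 (a' + m%:Z) * conjc (f K2 (a' + m%:Z)))
       = (K1 == K2)%:R) /\
  (forall K, inK `|b' - a'|%N K -> forall j : int, a' <= j < b' ->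
     f (- K) j = - 'i * conjc (f K j)).

End Defs.

(* Main.v *)
Require Import Defs.
From HB Require Import structures.
From mathcomp Require Import all_boot all_order all_algebra.
From mathcomp Require Import all_classical all_reals all_analysis.
From mathcomp Require Import complex ring lra zify.
Import Order.TTheory GRing.Theory Num.Theory.
Local Open Scope ring_scope.
Local Open Scope complex_scope.

Section Aux.
Variable R : realType.
Local Notation C := R[i].
Variables a b : int.

Local Notation sv r x := ((@spinval R a b r x)%:C).

Lemma flipK j : involutive (@flipbelow a b j).
Proof. move=> r; apply/ffunP=> i; rewrite !ffunE; case: ifP => h; rewrite ?h ?negbK //. Qed.

Lemma flipC j j' r : flipbelow j (flipbelow j' r) = flipbelow j' (@flipbelow a b j r).
Proof. by apply/ffunP=> i; rewrite !ffunE; do 2 case: ifP => //. Qed.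

Lemma spinval_flip j r x : a <= x <= b ->
  @spinval R a b (@flipbelow a b j r) x = if x <= j then - @spinval R a b r x else @spinval R a b r x.
Proof.
move=> /andP[hax hxb]; rewrite /spinval ffunE.
have hx : (`|x - a|%N < nsites a b)%N.
  rewrite /nsites ltnS; rewrite -lez_nat !gez0_abs ?subr_ge0 //; first by rewrite lerD2r.
  by apply: le_trans hxb.
have e : a + (`|x - a|%N)%:Z = x by rewrite gez0_abs ?subr_ge0 //; lia.
rewrite (inordK hx) e.
by case: (x <= j); case: (r _); rewrite //= ?opprK.
Qed.

Lemma sv_flip j r x : a <= x <= b ->
  sv (@flipbelow a b j r) x = if x <= j then - sv r x else sv r x.
Proof. by move=> h; rewrite spinval_flip //; case: ifP => _ //; rewrite rmorphN. Qed.

Lemma sv_sq r x : sv r x * sv r x = 1.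
Proof. by rewrite -rmorphM /spinval; case: ifP => _; rewrite ?mulr1 ?mulrNN ?mulr1. Qed.

Lemma sv_conj r x : (sv r x)^*%R = sv r x.
Proof. exact: conjc_real. Qed.


Local Notation op := (op R a b).
Local Notation N := #|{: spin a b}|.

Lemma op_ext (c c' : spin a b -> C) g g' : c =1 c' -> g =1 g' ->
  op_of c g = op_of c' g'.
Proof. by move=> hc hg; apply/matrixP=> s r; rewrite !mxE hc hg. Qed.

Lemma opM (c d : spin a b -> C) g h :
  op_of c g *m op_of d h = op_of (fun r => c (h r) * d r) (g \o h).
Proof.
apply/matrixP=> s r; rewrite !mxE.
rewrite (bigD1 (enum_rank (h (enum_val r)))) //= big1 ?addr0.
  rewrite !mxE enum_rankK eqxx.
  by case: ifP => _; rewrite ?mul0r.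
move=> t ht; rewrite !mxE.
have -> : (enum_val t == h (enum_val r)) = false.
  by apply/negbTE; apply: contra ht => /eqP <-; rewrite enum_valK.
by rewrite mulr0.
Qed.

Lemma opD (c d : spin a b -> C) g :
  op_of c g + op_of d g = op_of (fun r => c r + d r) g.
Proof. by apply/matrixP=> s r; rewrite !mxE; case: ifP => _; rewrite ?addr0. Qed.

Lemma opZ (k : C) (c : spin a b -> C) g :
  k *: op_of c g = op_of (fun r => k * c r) g.
Proof. by apply/matrixP=> s r; rewrite !mxE; case: ifP => _; rewrite ?mulr0. Qed.

Lemma opN (c : spin a b -> C) g :
  - op_of c g = op_of (fun r => - c r) g.
Proof. by apply/matrixP=> s r; rewrite !mxE; case: ifP => _; rewrite ?oppr0. Qed.

Lemma op_id (k : C) : op_of (fun _ : spin a b => k) id = k%:M.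
Proof.
apply/matrixP=> s r; rewrite !mxE /=.
by rewrite (inj_eq enum_val_inj); case: eqP.
Qed.

Lemma op0 g : op_of (fun _ : spin a b => 0 : C) g = 0.
Proof. by apply/matrixP=> s r; rewrite !mxE; case: ifP. Qed.

Lemma op_adj (c : spin a b -> C) g : involutive g ->
  adj (op_of c g) = op_of (fun r => (c (g r))^*%R) g.
Proof.
move=> hg; apply/matrixP=> s r; rewrite !mxE.
have -> : (enum_val r == g (enum_val s)) = (enum_val s == g (enum_val r)).
  apply/eqP/eqP => ->; by rewrite hg.
by case: eqP => [->|_]; last exact: conjC0.
Qed.

Lemma adjZ (k : C) (A : op) : adj (k *: A) = k^*%R *: adj A.
Proof. by apply/matrixP=> s r; rewrite !mxE rmorphM. Qed.

Lemma adj_sum n (X : 'I_n -> op) : adj (\sum_(m < n) X m) = \sum_(m < n) adj (X m).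
Proof.
apply/matrixP=> s r; rewrite !mxE !summxE rmorph_sum; apply: eq_bigr => m _.
by rewrite !mxE.
Qed.

Lemma anticomm_sum (k1 k2 : C) n n' (X : 'I_n -> op) (Y : 'I_n' -> op) :
  anticomm (k1 *: \sum_(m < n) X m) (k2 *: \sum_(m < n') Y m) =
  (k1 * k2) *: \sum_(m < n) \sum_(m' < n') anticomm (X m) (Y m').
Proof.
rewrite /anticomm -!scalemxAl -!scalemxAr !scalerA [k2 * k1]mulrC -scalerDr.
congr (_ *: _).
rewrite !mulmx_suml.
under eq_bigr do rewrite mulmx_sumr.
under [X in _ + X = _]eq_bigr do rewrite mulmx_sumr.
rewrite [X in _ + X = _]exchange_big /= -big_split /=.
by apply: eq_bigr => m _; rewrite -big_split.
Qed.

Definition site (j : int) (al be : C) : op :=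
  op_of (fun r => al * sv r j + be * sv r (j + 1)) (@flipbelow a b j).

Lemma siteZ (k : C) j al be : k *: site j al be = site j (k * al) (k * be).
Proof. rewrite /site opZ; apply: op_ext => // r; ring. Qed.

Lemma site_same j al be ga de : a <= j -> j < b ->
  anticomm (site j al be) (site j ga de) = (2 * (be * de - al * ga))%:M.
Proof.
move=> h1 h2; rewrite /anticomm /site !opM opD -op_id.
have hj : a <= j <= b by apply/andP; split; lia.
have hj1 : a <= j + 1 <= b by apply/andP; split; lia.
apply: op_ext => r /=; last exact: flipK.
rewrite !sv_flip // lexx.
have -> : (j + 1 <= j) = false by lia.
have e1 := sv_sq r j; have e2 := sv_sq r (j + 1).
ring: e1 e2.
Qed.

Lemma site_diff j j' al be ga de : a <= j -> j < b -> a <= j' -> j' < b -> j < j' ->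
  anticomm (site j al be) (site j' ga de) = 0.
Proof.
move=> h1 h2 h3 h4 h5; rewrite /anticomm /site !opM.
rewrite [X in _ + X](@op_ext _ _ _ (flipbelow j \o flipbelow j') (frefl _)
  (fun r => flipC j' j r)) opD -(op0 (flipbelow j \o flipbelow j')).
apply: op_ext => r //=.
have hj : a <= j <= b by apply/andP; split; lia.
have hj1 : a <= j + 1 <= b by apply/andP; split; lia.
have hj' : a <= j' <= b by apply/andP; split; lia.
have hj1' : a <= j' + 1 <= b by apply/andP; split; lia.
rewrite !sv_flip //.
have -> : (j <= j') by lia.
have -> : (j + 1 <= j') by lia.
have -> : (j' <= j) = false by lia.
have -> : (j' + 1 <= j) = false by lia.
ring.
Qed.

Lemma site_adj j al be : a <= j -> j < b ->
  adj (site j al be) = site j (- al^*%R) (be^*%R).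
Proof.
move=> h1 h2; rewrite /site op_adj; last exact: flipK.
apply: op_ext => r //.
have hj : a <= j <= b by apply/andP; split; lia.
have hj1 : a <= j + 1 <= b by apply/andP; split; lia.
rewrite !sv_flip // lexx.
have -> : (j + 1 <= j) = false by lia.
rewrite rmorphD !rmorphM rmorphN /= !sv_conj; ring.
Qed.

Lemma conjcE (z : C) : conjc z = z^*%R. Proof. by []. Qed.

Definition u : C := ((Num.sqrt (2:R))%:C)^-1.
Definition Acoef (z : C) : C := 'i * z * (- u) - 'i * z^*%R * (- 'i * u).
Definition Bcoef (z : C) : C := 'i * z * ('i * u) - 'i * z^*%R * u.

Lemma mode_site lo hi (f : int -> C) : mode_op a b lo hi f =
  (eipi4 R / 2%:R) *: \sum_(m < `|hi - lo|%N)
     site (lo + m%:Z) (Acoef (f (lo + m%:Z))) (Bcoef (f (lo + m%:Z))).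
Proof.
rewrite /mode_op; congr (_ *: _); apply: eq_bigr => m _ /=.
rewrite /psi /psistar !opZ opN opD /site /Acoef /Bcoef /u.
apply: op_ext => r //; rewrite rmorphN !conjcE; ring.
Qed.


Lemma hI : 'i * 'i = -1 :> C.
Proof. by rewrite -expr2 sqrCi. Qed.

Lemma hs : (Num.sqrt (2:R))%:C * (Num.sqrt (2:R))%:C = 2 :> C.
Proof. by rewrite -rmorphM -expr2 sqr_sqrtr ?ler0n // rmorph_nat. Qed.

Lemma hs0 : (Num.sqrt (2:R))%:C != 0 :> C.
Proof. by apply/negP => /eqP h; move: hs; rewrite h mulr0 => /eqP; rewrite eq_sym pnatr_eq0. Qed.

Lemma hu : u * u = 2^-1.
Proof. by rewrite /u -invfM hs. Qed.

Lemma conj_u : u^*%R = u.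
Proof. rewrite /u fmorphV /=; congr (_^-1); exact: conjc_real. Qed.

Lemma he : eipi4 R = u + 'i * u.
Proof.
rewrite /u -fmorphV /= {1}[eipi4 R]complexE /eipi4 /=.
by [].
Qed.

Lemma conj_half : (2^-1 : C)^*%R = 2^-1.
Proof. by rewrite fmorphV /= conjC_nat. Qed.

Lemma adjA z : (eipi4 R / 2%:R)^*%R * (- (Acoef z)^*%R) =
  (eipi4 R / 2%:R) * Acoef (- 'i * z^*%R).
Proof.
rewrite he /Acoef.
rewrite ?(rmorphB, rmorphD, rmorphM, rmorphN, conjCi, conjCK, conj_u, conj_half) /=.
rewrite ?(rmorphB, rmorphD, rmorphM, rmorphN, conjCi, conjCK, conj_u, conj_half) /=.
have h := hI; ring: h.
Qed.

Lemma adjB z : (eipi4 R / 2%:R)^*%R * (Bcoef z)^*%R =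
  (eipi4 R / 2%:R) * Bcoef (- 'i * z^*%R).
Proof.
rewrite he /Bcoef.
rewrite ?(rmorphB, rmorphD, rmorphM, rmorphN, conjCi, conjCK, conj_u, conj_half) /=.
rewrite ?(rmorphB, rmorphD, rmorphM, rmorphN, conjCi, conjCK, conj_u, conj_half) /=.
have h := hI; ring: h.
Qed.

Lemma keyC z1 z2 : (eipi4 R / 2%:R) * (eipi4 R / 2%:R) *
   (2 * (Bcoef z1 * Bcoef z2 - Acoef z1 * Acoef z2)) =
  (z1 * (- 'i * z2^*%R)^*%R + (z1 * (- 'i * z2^*%R)^*%R)^*%R) / 2.
Proof.
rewrite he /Acoef /Bcoef.
rewrite ?(rmorphB, rmorphD, rmorphM, rmorphN, conjCi, conjCK, conj_u, conj_half) /=.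
rewrite ?(rmorphB, rmorphD, rmorphM, rmorphN, conjCi, conjCK, conj_u, conj_half) /=.
rewrite ?conjCi ?opprK.
pose L w := (w + 'i*w) / 2%:R * ((w + 'i*w) / 2%:R) *
   (2 * (('i * z1 * ('i * w) - 'i * z1^*%R * w) * ('i * z2 * ('i * w) - 'i * z2^*%R * w) -
        ('i * z1 * - w - 'i * z1^*%R * (- 'i * w)) * ('i * z2 * - w - 'i * z2^*%R * (- 'i * w)))) : C.
rewrite -[X in X = _]/(L u).
have -> : L u = (u*u)*(u*u) * L 1 by rewrite /L; ring.
rewrite hu /L; have h := hI; field: h; by [].
Qed.

Lemma anticommC (A B : op) : anticomm A B = anticomm B A.
Proof. by rewrite /anticomm addrC. Qed.

Lemma fam_anticomm lo hi (f1 f2 g : int -> C) : a <= lo -> lo <= hi -> hi <= b ->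
  (forall j, lo <= j < hi -> g j = - 'i * conjc (f2 j)) ->
  anticomm (mode_op a b lo hi f1) (mode_op a b lo hi f2) =
  ('Re (\sum_(m < `|hi - lo|%N) f1 (lo + m%:Z) * conjc (g (lo + m%:Z))))%:M.
Proof.
move=> h1 h2 h3 hg.
rewrite !mode_site anticomm_sum.
have hb m : (m < `|hi - lo|%N)%N -> a <= lo + m%:Z /\ lo + m%:Z < b by move=> hm; split; lia.
rewrite (eq_bigr (fun m : 'I_ _ => (2 * (Bcoef (f1 (lo + m%:Z)) * Bcoef (f2 (lo + m%:Z)) -
      Acoef (f1 (lo + m%:Z)) * Acoef (f2 (lo + m%:Z))))%:M)); last first.
  move=> m _; rewrite (bigD1 m) //= big1 ?addr0.
    by have [ha hb'] := hb m (ltn_ord m); rewrite site_same.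
  move=> m' hm'.
  have [ha hb'] := hb m (ltn_ord m); have [ha' hb''] := hb m' (ltn_ord m').
  have : (m : nat) != m' by rewrite eq_sym.
  case: (ltngtP m m') => // hmm _.
    by apply: site_diff => //; lia.
  by rewrite anticommC; apply: site_diff => //; lia.
rewrite -(raddf_sum (@scalar_mx C N)) scale_scalar_mx; congr (_%:M).
rewrite ReE rmorph_sum -big_split /= mulr_suml mulr_sumr; apply: eq_bigr => m _.
have [ha hb'] := hb m (ltn_ord m); have hm := ltn_ord m.
rewrite !conjcE hg; last by apply/andP; split; lia.
rewrite conjcE -keyC; ring.
Qed.

Lemma fam_cross lo hi lo' hi' (f1 f2 : int -> C) : a <= lo -> lo <= hi -> hi <= lo' -> lo' <= hi' -> hi' <= b ->
  anticomm (mode_op a b lo hi f1) (mode_op a b lo' hi' f2) = 0.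
Proof.
move=> h1 h2 h3 h4 h5.
rewrite !mode_site anticomm_sum big1 ?scaler0 // => m _.
apply: big1 => m' _; apply: site_diff; have := ltn_ord m; have := ltn_ord m'; lia.
Qed.

Lemma fam_adj lo hi (f g : int -> C) : a <= lo -> lo <= hi -> hi <= b ->
  (forall j, lo <= j < hi -> g j = - 'i * conjc (f j)) ->
  adj (mode_op a b lo hi f) = mode_op a b lo hi g.
Proof.
move=> h1 h2 h3 hg.
rewrite !mode_site adjZ adj_sum !scaler_sumr; apply: eq_bigr => m _.
have hm := ltn_ord m.
rewrite site_adj; [|lia|lia].
rewrite !siteZ hg; last by apply/andP; split; lia.
by rewrite !conjcE adjA adjB.
Qed.
End Aux.

Theorem proposition5p13 (R : realType) (a b : int) (ha : a < 0) (hb : 0 < b)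
  (fL fR : int -> int -> R[i])
  (HL : restrictions a 0 fL) (HR : restrictions 0 b fR)
  (KL : known_facts a 0 fL) (KR : known_facts 0 b fR) :
  let ellL := `|a|%N in
  let ellR := `|b|%N in
  let chiL := fun K => mode_op a b a 0 (fL K) in
  let chiR := fun K => mode_op a b 0 b (fR K) in
  (forall K, inK ellL K -> adj (chiL K) = chiL (- K)) /\
  (forall K, inK ellR K -> adj (chiR K) = chiR (- K)) /\
  (forall K1 K2, inK ellL K1 -> inK ellL K2 ->
     anticomm (chiL K1) (chiL K2) = (K1 == - K2)%:R%:M) /\
  (forall K1 K2, inK ellR K1 -> inK ellR K2 ->
     anticomm (chiR K1) (chiR K2) = (K1 == - K2)%:R%:M) /\
  (forall K K', inK ellL K -> inK ellR K' ->
     anticomm (chiL K) (chiR K') = 0).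
Proof.
move=> ellL ellR chiL chiR.
case: KL => KL1 KL2; case: KR => KR1 KR2.
have eL : `|0 - a|%N = ellL by rewrite sub0r abszN.
have eR : `|b - 0|%N = ellR by rewrite subr0.
have inKN n K : inK n (- K) = inK n K by rewrite /inK abszN.
rewrite -eL -eR in chiL chiR *.
split; [|split; [|split; [|split]]].
- move=> K hK; apply: fam_adj; rewrite ?lexx ?ltW //.
  by move=> j hj; rewrite KL2.
- move=> K hK; apply: fam_adj; rewrite ?lexx ?ltW //.
  by move=> j hj; rewrite KR2.
- move=> K1 K2 h1 h2; rewrite /chiL (@fam_anticomm _ _ _ _ _ _ _ (fL (- K2))) ?lexx ?ltW //.
    by rewrite KL1 ?inKN.
  by move=> j hj; rewrite KL2.
- move=> K1 K2 h1 h2; rewrite /chiR (@fam_anticomm _ _ _ _ _ _ _ (fR (- K2))) ?lexx ?ltW //.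
    by rewrite KR1 ?inKN.
  by move=> j hj; rewrite KR2.
- by move=> K K' _ _; apply: fam_cross; rewrite ?lexx ?ltW.
Qed.
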